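(* Let $q=2^h$, let $\alpha\in{\rm GF}(q)$ be such that $X^2+X+\alpha$ is irreducible over ${\rm GF}(q)$, and let $G=\{M_{a,b,c,d}: a\in{\rm GF}(q)\setminus\{0\},\ b,c,d\in{\rm GF}(q),\ c^2+cd+\alpha d^2=1\}$, where $$M_{a,b,c,d}=\begin{pmatrix}1&0&0&0&0\\0&ac&\alpha ad&bc&\alpha bd\\0&ad&a(c+d)&bd&b(c+d)\\0&0&0&a^{-1}c&\alpha a^{-1}d\\0&0&0&a^{-1}d&a^{-1}(c+d)\end{pmatrix},$$ acting on the points (column vectors) of ${\rm PG}(4,q)$ by left multiplication. Then, under the action of $G$ on the planes of ${\rm PG}(4,q)$, there are $q^2-q$ distinct plane-orbits of size $q^3-q$, each consisting of planes any two of which intersect in exactly one point. *)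

(* Defs.v *)
From HB Require Import structures.
From mathcomp Require Import all_boot all_order all_algebra all_fingroup all_field.
Set Implicit Arguments. Unset Strict Implicit. Unset Printing Implicit Defensive.
Import GRing.Theory Num.Theory.
Local Open Scope ring_scope.

Definition Mabcd (F : fieldType) (alpha a b c d : F) : 'M[F]_5 :=
  let rows : seq (seq F) :=
    [:: [:: 1; 0; 0; 0; 0];
        [:: 0; a * c; alpha * a * d; b * c; alpha * b * d];
        [:: 0; a * d; a * (c + d); b * d; b * (c + d)];
        [:: 0; 0; 0; a^-1 * c; alpha * a^-1 * d];
        [:: 0; 0; 0; a^-1 * d; a^-1 * (c + d)]] in
  \matrix_(i < 5, j < 5) nth 0 (nth [::] rows i) j.

Definition Ggroup (F : finFieldType) (alpha : F) : {set 'M[F]_5} :=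
  [set M | [exists a : F, exists b : F, exists c : F, exists d : F,
     [&& a != 0, c ^+ 2 + c * d + alpha * d ^+ 2 == 1 & M == Mabcd alpha a b c d]]].

(* Subspaces of F^5 are represented by the row space of a 5x5 matrix, in the
   canonical form <<U>>%MS; a column vector v lies in the subspace iff
   v^T <= U. *)
Definition planes (F : finFieldType) : {set 'M[F]_5} :=
  [set U : 'M[F]_5 | (\rank U == 3)%N && (<<U>>%MS == U)].

(* Image of the subspace U under the map v |-> M v on column vectors:
   in row convention, the row space of U *m M^T. *)
Definition act_sub (F : fieldType) (M U : 'M[F]_5) : 'M[F]_5 :=
  <<U *m M^T>>%MS.

Definition plane_orbit (F : finFieldType) (alpha : F) (U : 'M[F]_5)
  : {set 'M[F]_5} :=
  [set act_sub M U | M in Ggroup alpha].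

Definition plane_orbits (F : finFieldType) (alpha : F) : {set {set 'M[F]_5}} :=
  [set plane_orbit alpha U | U in planes F].

(* Main.v *)
Require Import Defs.
From HB Require Import structures.
From mathcomp Require Import all_boot all_order all_algebra all_fingroup all_field.
From mathcomp Require Import ring zify.
Import GRing.Theory Num.Theory.
Local Open Scope ring_scope.

Lemma char2 (F : finFieldType) h : #|F| = (2 ^ h)%N -> 2 = 0 :> F.
Proof. by move=> hF; have := card_finPcharP hF (isT : prime 2); move/pcharf0. Qed.

Lemma noroot (F : finFieldType) (alpha : F) :
  irreducible_poly ('X^2 + 'X + alpha%:P) -> forall x : F, x ^+ 2 + x + alpha != 0.
Proof.
move=> [_ hirr] x; apply/negP => /eqP hx.
have hr : root ('X^2 + 'X + alpha%:P) x by rewrite /root !hornerE hx.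
have h1 : size ('X - x%:P) != 1%N by rewrite size_XsubC.
have h3 : ('X - x%:P) %| ('X^2 + 'X + alpha%:P) by rewrite dvdp_XsubCl.
have := hirr _ h1 h3.
move/eqp_size; rewrite size_XsubC.
rewrite size_addl ?size_addl ?size_polyXn ?size_polyX ?size_polyC //.
by case: (alpha != 0).
Qed.

Lemma ar1 q : (q.-1 * q = q ^ 2 - q)%N.
Proof. case: q => // n. rewrite succnK. nia. Qed.
Lemma ar2 q : (q.-1 * q * q.+1 = q ^ 3 - q)%N.
Proof. case: q => // n. rewrite succnK. nia. Qed.

Definition o (k : nat) : 'I_5 := inord k.

Lemma sum5 (F : fieldType) (f : 'I_5 -> F) :
  \sum_(k < 5) f k = f (o 0) + f (o 1) + f (o 2) + f (o 3) + f (o 4).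
Proof.
rewrite !big_ord_recl big_ord0 addr0 !addrA.
by do !congr (_ + _); congr f; apply: val_inj; rewrite /= inordK.
Qed.

Definition o3 (k : nat) : 'I_3 := inord k.

Lemma sum3 (F : fieldType) (f : 'I_3 -> F) :
  \sum_(k < 3) f k = f (o3 0) + f (o3 1) + f (o3 2).
Proof.
rewrite !big_ord_recl big_ord0 addr0 !addrA.
by do !congr (_ + _); congr f; apply: val_inj; rewrite /= inordK.
Qed.

Lemma rv5P (F : fieldType) (u v : 'rV[F]_5) :
  (forall k, (k < 5)%N -> u 0 (o k) = v 0 (o k)) -> u = v.
Proof. by move=> H; apply/rowP => j; have := H j (ltn_ord j); rewrite /o inord_val. Qed.

Lemma rv3P (F : fieldType) (u v : 'rV[F]_3) :
  (forall k, (k < 3)%N -> u 0 (o3 k) = v 0 (o3 k)) -> u = v.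
Proof. by move=> H; apply/rowP => j; have := H j (ltn_ord j); rewrite /o3 inord_val. Qed.

Lemma row_freeP' (F : fieldType) m n (A : 'M[F]_(m, n)) :
  (forall v : 'rV_m, v *m A = 0 -> v = 0) -> row_free A.
Proof.
move=> H; rewrite -kermx_eq0; apply/negPn/negP => /rowV0Pn [v].
by rewrite sub_kermx => /eqP /H ->; rewrite eqxx.
Qed.

Section Main.
Variables (F : finFieldType) (alpha : F).
Hypothesis h2 : 2 = 0 :> F.
Hypothesis hirr : forall x : F, x ^+ 2 + x + alpha != 0.

Definition NN (c d : F) := c ^+ 2 + c * d + alpha * d ^+ 2.

Lemma c2 (x : F) : x + x = 0.
Proof. by ring: h2. Qed.

Lemma c2eq (x y : F) : x + y = 0 -> x = y.
Proof. by move=> H; rewrite -[y]add0r -H -addrA c2 addr0. Qed.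

Lemma sq_inj (x y : F) : x ^+ 2 = y ^+ 2 -> x = y.
Proof.
move=> H.
have e1 : (x + y) ^+ 2 = x ^+ 2 + y ^+ 2 by ring: h2.
have e : (x + y) ^+ 2 = 0 by rewrite e1 H c2.
by move/eqP: e; rewrite expf_eq0 /= => /eqP; exact: c2eq.
Qed.

Lemma aniso c d : NN c d = 0 -> c = 0 /\ d = 0.
Proof.
move=> H; case: (eqVneq d 0) => [d0|hd].
  subst d; split=> //.
  have e : c ^+ 2 = 0 by rewrite -H /NN; ring.
  by move/eqP: e; rewrite expf_eq0 /= => /eqP.
exfalso; apply: (negP (hirr (c / d))); apply/eqP.
have -> : (c / d) ^+ 2 + c / d + alpha = NN c d / d ^+ 2 by rewrite /NN; field.
by rewrite H mul0r.
Qed.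

Lemma sysA x y z1 z2 : NN x y != 0 -> x * z1 + y * z2 = 0 ->
  alpha * y * z1 + (x + y) * z2 = 0 -> z1 = 0 /\ z2 = 0.
Proof.
move=> hN e1 e2.
have H1 : NN x y * z1 = (x + y) * (x * z1 + y * z2) + y * (alpha * y * z1 + (x + y) * z2).
  by rewrite /NN; ring: h2.
have H2 : NN x y * z2 = alpha * y * (x * z1 + y * z2) + x * (alpha * y * z1 + (x + y) * z2).
  by rewrite /NN; ring: h2.
rewrite e1 e2 !mulr0 addr0 in H1 H2.
by move/eqP: H1; move/eqP: H2; rewrite !mulf_eq0 (negPf hN) /= => /eqP -> /eqP ->.
Qed.

Lemma ME a b c d i j : (i < 5)%N -> (j < 5)%N ->
  Mabcd alpha a b c d (o i) (o j) =
  nth 0 (nth [::] [:: [:: 1; 0; 0; 0; 0];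
        [:: 0; a * c; alpha * a * d; b * c; alpha * b * d];
        [:: 0; a * d; a * (c + d); b * d; b * (c + d)];
        [:: 0; 0; 0; a^-1 * c; alpha * a^-1 * d];
        [:: 0; 0; 0; a^-1 * d; a^-1 * (c + d)]] i) j.
Proof. by move=> hi hj; rewrite /Mabcd mxE !inordK. Qed.

Lemma vM (v : 'rV[F]_5) a b c d :
  let w := v *m Mabcd alpha a b c d in
  let z k := v 0 (o k) in
  [/\ w 0 (o 0) = z 0%N,
      w 0 (o 1) = a * c * z 1%N + a * d * z 2%N,
      w 0 (o 2) = alpha * a * d * z 1%N + a * (c + d) * z 2%N,
      w 0 (o 3) = b * c * z 1%N + b * d * z 2%N + a^-1 * c * z 3%N + a^-1 * d * z 4%N
    & w 0 (o 4) = alpha * b * d * z 1%N + b * (c + d) * z 2%N + alpha * a^-1 * d * z 3%N + a^-1 * (c + d) * z 4%N].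
Proof. by split; rewrite mxE sum5 !ME //=; ring. Qed.

Definition Qf (v : 'rV[F]_5) := v 0 (o 1) * v 0 (o 4) + v 0 (o 2) * v 0 (o 3).

Lemma QfM v a b c d : a != 0 -> NN c d = 1 -> Qf (v *m Mabcd alpha a b c d) = Qf v.
Proof.
move=> ha hN; rewrite /Qf; case: (vM v a b c d) => _ -> -> -> ->.
rewrite -[in RHS](mul1r (_ + _)) -hN /NN.
by field: h2.
Qed.

Definition X3 (s t : F) : 'M[F]_(3,5) := \matrix_(i < 3, j < 5)
  nth 0 (nth [::] [:: [:: s; 1; 0; 0; 0]; [:: t; 0; 1; 0; 1]; [:: s + t; 0; 0; 1; 1]] i) j.

Definition perpv s t (z : 'rV[F]_5) :=
  [/\ s * z 0 (o 0) + z 0 (o 1) = 0, t * z 0 (o 0) + z 0 (o 2) + z 0 (o 4) = 0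
    & (s + t) * z 0 (o 0) + z 0 (o 3) + z 0 (o 4) = 0].

Lemma zX3 s t (z : 'rV[F]_5) i : (i < 3)%N ->
  (z *m (X3 s t)^T) 0 (o3 i) =
  nth 0 [:: s * z 0 (o 0) + z 0 (o 1); t * z 0 (o 0) + z 0 (o 2) + z 0 (o 4);
            (s + t) * z 0 (o 0) + z 0 (o 3) + z 0 (o 4)] i.
Proof.
case: i => [|[|[|i]]] // _; rewrite mxE sum5 !mxE /o3 /o !inordK //=; ring.
Qed.

Lemma perpP s t z : z *m (X3 s t)^T = 0 <-> perpv s t z.
Proof.
split.
  move=> H; have e i : (i < 3)%N -> (z *m (X3 s t)^T) 0 (o3 i) = 0 by rewrite H mxE.
  by split; [have := e 0%N isT | have := e 1%N isT | have := e 2%N isT]; rewrite zX3.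
case=> p1 p2 p3; apply: rv3P => k hk; rewrite zX3 // mxE.
by case: k hk => [|[|[|k]]].
Qed.

Lemma core s t (hs : s != 0) u a b c d a' b' c' d' :
  a != 0 -> NN c d = 1 -> a' != 0 -> NN c' d' = 1 ->
  perpv s t (u *m Mabcd alpha a b c d) -> perpv s t (u *m Mabcd alpha a' b' c' d') ->
  u = 0 \/ (a, b, c, d) = (a', b', c', d').
Proof.
move=> ha hN ha' hN' P1 P2.
have hQ : Qf (u *m Mabcd alpha a b c d) = Qf (u *m Mabcd alpha a' b' c' d') by rewrite !QfM.
move: P1 P2 hQ; rewrite /Qf /perpv.
set W0 := (u *m Mabcd alpha a b c d) 0 (o 0).
set W1 := (u *m Mabcd alpha a b c d) 0 (o 1).
set W2 := (u *m Mabcd alpha a b c d) 0 (o 2).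
set W3 := (u *m Mabcd alpha a b c d) 0 (o 3).
set W4 := (u *m Mabcd alpha a b c d) 0 (o 4).
set V0 := (u *m Mabcd alpha a' b' c' d') 0 (o 0).
set V1 := (u *m Mabcd alpha a' b' c' d') 0 (o 1).
set V2 := (u *m Mabcd alpha a' b' c' d') 0 (o 2).
set V3 := (u *m Mabcd alpha a' b' c' d') 0 (o 3).
set V4 := (u *m Mabcd alpha a' b' c' d') 0 (o 4).
case=> p1 p2 p3 [q1 q2 q3] hQ.
have eW1 : W1 = s * W0 by apply/esym/c2eq.
have eW2 : W2 = t * W0 + W4.
  by apply/esym/c2eq; rewrite -p2; ring.
have eW3 : W3 = (s + t) * W0 + W4 by apply/esym/c2eq; rewrite -p3; ring.
have eV1 : V1 = s * V0 by apply/esym/c2eq.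
have eV2 : V2 = t * V0 + V4 by apply/esym/c2eq; rewrite -q2; ring.
have eV3 : V3 = (s + t) * V0 + V4 by apply/esym/c2eq; rewrite -q3; ring.
have eWV0 : W0 = V0.
  by rewrite /W0 /V0; case: (vM u a b c d) => -> _ _ _ _; case: (vM u a' b' c' d') => -> _ _ _ _.
have eWV4 : W4 = V4.
  apply: sq_inj.
  have : t * (s + t) * W0 ^+ 2 + W4 ^+ 2 = t * (s + t) * V0 ^+ 2 + V4 ^+ 2.
    move: hQ; rewrite eW1 eW2 eW3 eV1 eV2 eV3 => hQ.
    have r1 : t * (s + t) * W0 ^+ 2 + W4 ^+ 2 = s * W0 * W4 + (t * W0 + W4) * ((s + t) * W0 + W4) by ring: h2.
    have r2 : t * (s + t) * V0 ^+ 2 + V4 ^+ 2 = s * V0 * V4 + (t * V0 + V4) * ((s + t) * V0 + V4) by ring: h2.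
    by rewrite r1 r2.
  by rewrite eWV0 => /addrI.
have eWV1 : W1 = V1 by rewrite eW1 eV1 eWV0.
have eWV2 : W2 = V2 by rewrite eW2 eV2 eWV0 eWV4.
have eWV3 : W3 = V3 by rewrite eW3 eV3 eWV0 eWV4.
move: eWV1 eWV2 eWV3 eWV4 p1 p2 p3.
rewrite /W0 /W1 /W2 /W3 /W4 /V1 /V2 /V3 /V4.
case: (vM u a b c d) => -> -> -> -> ->.
case: (vM u a' b' c' d') => _ -> -> -> ->.
set z0 := u 0 (o 0); set z1 := u 0 (o 1); set z2 := u 0 (o 2).
set z3 := u 0 (o 3); set z4 := u 0 (o 4).
move=> e1 e2 e3 e4 p1 p2 p3.
have key : (z1 = 0 /\ z2 = 0) \/ (a, b, c, d) = (a', b', c', d').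
  set x := a * c - a' * c'; set y := a * d - a' * d'.
  have E1 : x * z1 + y * z2 = 0.
    have -> : x * z1 + y * z2 = (a * c * z1 + a * d * z2) - (a' * c' * z1 + a' * d' * z2)
      by rewrite /x /y; ring.
    by rewrite e1 subrr.
  have E2 : alpha * y * z1 + (x + y) * z2 = 0.
    have -> : alpha * y * z1 + (x + y) * z2 = (alpha * a * d * z1 + a * (c + d) * z2)
        - (alpha * a' * d' * z1 + a' * (c' + d') * z2) by rewrite /x /y; ring.
    by rewrite e2 subrr.
  case: (eqVneq (NN x y) 0) => hxy; last by left; apply: sysA hxy E1 E2.
  case: (aniso _ _ hxy) => /eqP hx /eqP hy.
  rewrite /x subr_eq0 in hx; rewrite /y subr_eq0 in hy.
  have ea : a = a'.
    apply: sq_inj.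
    have := congr2 NN (eqP hx) (eqP hy).
    have -> : NN (a * c) (a * d) = a ^+ 2 * NN c d by rewrite /NN; ring.
    have -> : NN (a' * c') (a' * d') = a' ^+ 2 * NN c' d' by rewrite /NN; ring.
    by rewrite hN hN' !mulr1.
  subst a'.
  have ec : c = c' := mulfI ha (eqP hx).
  have ed : d = d' := mulfI ha (eqP hy).
  subst c' d'.
  case: (eqVneq b b') => hb; first by right; rewrite hb.
  left; apply: (@sysA c d); first by rewrite hN oner_neq0.
    have : (b - b') * (c * z1 + d * z2) = 0.
      have -> : (b - b') * (c * z1 + d * z2) =
        (b * c * z1 + b * d * z2 + a^-1 * c * z3 + a^-1 * d * z4) -
        (b' * c * z1 + b' * d * z2 + a^-1 * c * z3 + a^-1 * d * z4) by ring.
      by rewrite e3 subrr.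
    by move/eqP; rewrite mulf_eq0 subr_eq0 (negPf hb) /= => /eqP.
  have : (b - b') * (alpha * d * z1 + (c + d) * z2) = 0.
    have -> : (b - b') * (alpha * d * z1 + (c + d) * z2) =
      (alpha * b * d * z1 + b * (c + d) * z2 + alpha * a^-1 * d * z3 + a^-1 * (c + d) * z4) -
      (alpha * b' * d * z1 + b' * (c + d) * z2 + alpha * a^-1 * d * z3 + a^-1 * (c + d) * z4) by ring.
    by rewrite e4 subrr.
  by move/eqP; rewrite mulf_eq0 subr_eq0 (negPf hb) /= => /eqP.
case: key => [[z10 z20] | ->]; last by right.
left.
rewrite z10 z20 !mulr0 !addr0 !add0r in p1 p2 p3.
have z00 : z0 = 0.
  by move/eqP: p1; rewrite mulf_eq0 (negPf hs) /= => /eqP.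
rewrite z00 !mulr0 !add0r in p2 p3.
have [z30 z40] : z3 = 0 /\ z4 = 0.
  apply: (@sysA (a^-1 * c) (a^-1 * d)).
  - have -> : NN (a^-1 * c) (a^-1 * d) = a^-1 ^+ 2 * NN c d by rewrite /NN; ring.
    by rewrite hN mulr1 expf_neq0 // invr_eq0.
  - have -> : a^-1 * c * z3 + a^-1 * d * z4 =
      (a^-1 * c * z3 + a^-1 * d * z4 + (alpha * a^-1 * d * z3 + a^-1 * (c + d) * z4)) -
      (alpha * a^-1 * d * z3 + a^-1 * (c + d) * z4) by ring.
    by rewrite p3 p2 subrr.
  - by rewrite -p2; ring.
apply: rv5P => k hk; rewrite mxE.
by case: k hk => [|[|[|[|[|k]]]]].
Qed.

Definition Pl s t : 'M[F]_5 := <<X3 s t>>%MS.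

Lemma rowfree_X3 s t : row_free (X3 s t).
Proof.
apply: row_freeP' => v hv.
have e j : (j < 5)%N -> (v *m X3 s t) 0 (o j) = 0 by rewrite hv mxE.
apply: rv3P => k hk; rewrite [RHS]mxE.
case: k hk => [|[|[|k]]] // _;
  [have := e 1%N isT | have := e 2%N isT | have := e 3%N isT];
  rewrite mxE sum3 !mxE /o3 /o !inordK //= => H; rewrite -H; ring.
Qed.

Lemma rank_Pl s t : \rank (Pl s t) = 3%N.
Proof. by rewrite /Pl mxrank_gen; apply/eqP; exact: rowfree_X3. Qed.

Lemma rowfree_M a b c d : a != 0 -> NN c d = 1 -> row_free (Mabcd alpha a b c d)^T.
Proof.
move=> ha hN; rewrite /row_free mxrank_tr; apply: row_freeP' => v hv.
have e j : (j < 5)%N -> (v *m Mabcd alpha a b c d) 0 (o j) = 0 by rewrite hv mxE.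
case: (vM v a b c d).
set z0 := v 0 (o 0); set z1 := v 0 (o 1); set z2 := v 0 (o 2).
set z3 := v 0 (o 3); set z4 := v 0 (o 4).
rewrite !e // => p0 p1 p2 p3 p4.
have [z10 z20] : z1 = 0 /\ z2 = 0.
  apply: (@sysA (a * c) (a * d)).
  - have -> : NN (a * c) (a * d) = a ^+ 2 * NN c d by rewrite /NN; ring.
    by rewrite hN mulr1 expf_neq0.
  - by rewrite p1.
  - by rewrite [RHS]p2; ring.
rewrite z10 z20 !mulr0 !add0r in p3 p4.
have [z30 z40] : z3 = 0 /\ z4 = 0.
  apply: (@sysA (a^-1 * c) (a^-1 * d)).
  - have -> : NN (a^-1 * c) (a^-1 * d) = a^-1 ^+ 2 * NN c d by rewrite /NN; ring.
    by rewrite hN mulr1 expf_neq0 // invr_eq0.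
  - by rewrite p3.
  - by rewrite [RHS]p4; ring.
apply: rv5P => k hk; rewrite mxE.
by case: k hk => [|[|[|[|[|k]]]]].
Qed.

Lemma act_eq M s t : act_sub M (Pl s t) = <<X3 s t *m M^T>>%MS.
Proof. by rewrite /act_sub /Pl; apply: eq_genmx; exact: eqmxMr _ (genmxE _). Qed.

Lemma rank_act s t a b c d : a != 0 -> NN c d = 1 ->
  \rank (act_sub (Mabcd alpha a b c d) (Pl s t)) = 3%N.
Proof.
move=> ha hN; rewrite act_eq mxrank_gen mxrankMfree ?rowfree_M //.
by apply/eqP; exact: rowfree_X3.
Qed.

Lemma perp_sub m k (Y : 'M[F]_(m, 5)) (Z : 'M[F]_(k, 5)) (z : 'rV[F]_5) :
  (Y <= Z)%MS -> z *m Z^T = 0 -> z *m Y^T = 0.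
Proof. by case/submxP => D -> H; rewrite trmx_mul mulmxA H mul0mx. Qed.

Lemma perp_M m (Y : 'M[F]_(m, 5)) (M : 'M[F]_5) (z : 'rV[F]_5) :
  z *m (Y *m M^T)^T = (z *m M) *m Y^T.
Proof. by rewrite trmx_mul trmxK mulmxA. Qed.

Lemma cap1 s t (hs : s != 0) a b c d a' b' c' d' :
  a != 0 -> NN c d = 1 -> a' != 0 -> NN c' d' = 1 ->
  (a, b, c, d) != (a', b', c', d') ->
  \rank (act_sub (Mabcd alpha a b c d) (Pl s t) :&: act_sub (Mabcd alpha a' b' c' d') (Pl s t))%MS = 1%N.
Proof.
move=> ha hN ha' hN' hne.
set A := act_sub (Mabcd alpha a b c d) (Pl s t).
set B := act_sub (Mabcd alpha a' b' c' d') (Pl s t).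
have rA : \rank A = 3%N by apply: rank_act.
have rB : \rank B = 3%N by apply: rank_act.
have rS : \rank (A + B)%MS = 5%N.
  have : row_free ((A + B)%MS)^T.
    apply: row_freeP' => v hv.
    have hA : v *m (X3 s t *m (Mabcd alpha a b c d)^T)^T = 0.
      apply: perp_sub hv; apply: submx_trans (addsmxSl A B).
      by rewrite /A act_eq genmxE.
    have hB : v *m (X3 s t *m (Mabcd alpha a' b' c' d')^T)^T = 0.
      apply: perp_sub hv; apply: submx_trans (addsmxSr A B).
      by rewrite /B act_eq genmxE.
    rewrite perp_M in hA; rewrite perp_M in hB.
    move/perpP: hA => hA; move/perpP: hB => hB.
    case: (@core s t hs v a b c d a' b' c' d' ha hN ha' hN' hA hB) => // heq.
    by rewrite heq eqxx in hne.
  by rewrite /row_free mxrank_tr => /eqP.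
have := mxrank_sum_cap A B; rewrite rS rA rB => H.
by apply/eqP; rewrite -(eqn_add2l 5) H.
Qed.

Lemma Mid : Mabcd alpha 1 0 1 0 = 1%:M.
Proof.
apply/matrixP => i j; rewrite -[i]inord_val -[j]inord_val.
rewrite ME // [RHS]mxE.
case: i => [[|[|[|[|[|i]]]]] hi] //; case: j => [[|[|[|[|[|j]]]]] hj] //=;
  rewrite -val_eqE /= !inordK //= ?invr1 ?mulr0 ?mul0r ?mulr1 ?addr0 ?mulr0n ?mulr1n ?mul1r //.
Qed.

Definition phiv : 'rV[F]_5 := \row_(j < 5) nth 0 [:: 0; 0; 1; 1; 1] j.
Definition psiv s t : 'rV[F]_5 := \row_(j < 5) nth 0 [:: 1; s; t; s + t; 0] j.

Lemma orbit_sep s1 t1 s2 t2 a b c d : a != 0 -> NN c d = 1 ->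
  Pl s1 t1 = act_sub (Mabcd alpha a b c d) (Pl s2 t2) -> (s1, t1) = (s2, t2).
Proof.
move=> ha hN H; rewrite act_eq in H.
have sub1 : (X3 s2 t2 *m (Mabcd alpha a b c d)^T <= X3 s1 t1)%MS.
  have : (X3 s2 t2 *m (Mabcd alpha a b c d)^T <= <<X3 s2 t2 *m (Mabcd alpha a b c d)^T>>)%MS
    by rewrite genmxE.
  by rewrite -H /Pl genmxE.
have pphi : phiv *m (X3 s1 t1)^T = 0.
  by apply/perpP; rewrite /perpv !mxE /o !inordK //=; split; ring: h2.
have := @perp_sub _ _ _ _ phiv sub1 pphi; rewrite perp_M => /perpP; rewrite /perpv.
case: (vM phiv a b c d) => -> -> -> -> ->; rewrite !mxE /o !inordK //=.
case=> p1 p2 p3.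
have hd : a * d = 0 by rewrite -p1; ring.
move/eqP: hd; rewrite mulf_eq0 (negPf ha) /= => /eqP hd; subst d.
have hc : c = 1.
  by apply: sq_inj; rewrite expr1n -hN /NN; ring.
subst c.
have hb : b = 0 by rewrite -p3; ring: h2.
subst b.
have haa : a = a^-1 by apply: c2eq; rewrite -p2; ring.
have ha1 : a = 1.
  by apply: sq_inj; rewrite expr1n expr2 {2}haa mulfV.
subst a.
rewrite Mid trmx1 mulmx1 in H.
have sub2 : (X3 s2 t2 <= X3 s1 t1)%MS.
  have : (X3 s2 t2 <= <<X3 s2 t2>>)%MS by rewrite genmxE.
  by rewrite -H /Pl genmxE.
have ppsi : psiv s1 t1 *m (X3 s1 t1)^T = 0.
  by apply/perpP; rewrite /perpv !mxE /o !inordK //=; split; ring: h2.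
have := @perp_sub _ _ _ _ (psiv s1 t1) sub2 ppsi => /perpP; rewrite /perpv !mxE /o !inordK //=.
case=> q1 q2 _.
have e1 : s2 = s1 by apply: c2eq; rewrite -q1; ring.
have e2 : t2 = t1 by apply: c2eq; rewrite -q2; ring.
by rewrite e1 e2.
Qed.

Definition Par : {set (F * F) * (F * F)} :=
  setX [set ab : F * F | ab.1 != 0] [set cd : F * F | NN cd.1 cd.2 == 1].
Definition Mp (p : (F * F) * (F * F)) := Mabcd alpha p.1.1 p.1.2 p.2.1 p.2.2.

Lemma GE : Ggroup alpha = Mp @: Par.
Proof.
apply/setP => M; rewrite inE; apply/idP/imsetP.
  case/existsP => a /existsP [b] /existsP [c] /existsP [d] /and3P [ha hN /eqP ->].
  by exists ((a, b), (c, d)) => //; rewrite !inE /= ha.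
case=> [[[a b] [c d]]]; rewrite !inE /= => /andP [ha hN] ->.
apply/existsP; exists a; apply/existsP; exists b; apply/existsP; exists c.
by apply/existsP; exists d; rewrite ha hN eqxx.
Qed.

Lemma orbE s t : plane_orbit alpha (Pl s t) = [set act_sub (Mp p) (Pl s t) | p in Par].
Proof. by rewrite /plane_orbit GE -imset_comp. Qed.

Lemma card_idx : #|[set ab : F * F | ab.1 != 0]| = (#|F|.-1 * #|F|)%N.
Proof.
have -> : [set ab : F * F | ab.1 != 0] = setX [set~ 0] setT.
  by apply/setP => -[a b]; rewrite !inE andbT.
by rewrite cardsX cardsC1 cardsT.
Qed.

Definition dd (s : F) := (s ^+ 2 + s + alpha)^-1.
Definition cp (s : F) := (1 + s * dd s, dd s).

Lemma dd_neq0 s : dd s != 0.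
Proof. by rewrite /dd invr_eq0 hirr. Qed.

Lemma card_conic : #|[set cd : F * F | NN cd.1 cd.2 == 1]| = #|F|.+1.
Proof.
have -> : [set cd : F * F | NN cd.1 cd.2 == 1] = (1, 0) |: (cp @: setT).
  apply/setP => -[c d]; rewrite !inE /=; apply/idP/idP.
    move/eqP=> hN; case: (eqVneq d 0) => [d0|hd].
      subst d; have hc : c = 1.
        by apply: sq_inj; rewrite expr1n -hN /NN; ring.
      by rewrite hc eqxx.
    apply/orP; right; apply/imsetP; exists ((c + 1) / d) => //.
    have hdd : dd ((c + 1) / d) = d.
      rewrite /dd.
      have -> : ((c + 1) / d) ^+ 2 + (c + 1) / d + alpha = (NN c d + 1 + d) / d ^+ 2.
        by rewrite /NN; field: h2.
      rewrite hN; have -> : (1 + 1 + d) / d ^+ 2 = d^-1 by field: h2.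
      by rewrite invrK.
    by rewrite /cp hdd; congr pair; field: h2.
  case/orP => [/eqP [-> ->] | /imsetP [s _ [-> ->]]].
    by apply/eqP; rewrite /NN; ring.
  have hD : dd s * (s ^+ 2 + s + alpha) = 1 by rewrite /dd mulVf.
  apply/eqP; rewrite /NN.
  have -> : (1 + s * dd s) ^+ 2 + (1 + s * dd s) * dd s + alpha * dd s ^+ 2 =
            1 + dd s + dd s * (dd s * (s ^+ 2 + s + alpha)) by ring: h2.
  by rewrite hD mulr1 -addrA c2 addr0.
rewrite cardsU1 card_in_imset ?cardsT.
  suff -> : (1, 0) \notin cp @: setT by [].
  apply/imsetP => -[s _ [_ e]]; move: (dd_neq0 s); by rewrite -e eqxx.
move=> s1 s2 _ _ [e1 e2]; rewrite /cp e2 in e1.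
by move/addrI/(mulIf (dd_neq0 s2)): e1.
Qed.

Lemma card_Par : #|Par| = (#|F|.-1 * #|F| * #|F|.+1)%N.
Proof. by rewrite cardsX card_idx card_conic. Qed.

Lemma Pl_in s t : Pl s t \in planes F.
Proof. by rewrite inE rank_Pl /Pl genmx_id !eqxx. Qed.

Lemma main : exists S : {set {set 'M[F]_5}},
  [/\ #|S| = (#|F|.-1 * #|F|)%N, S \subset plane_orbits alpha
    & forall O, O \in S -> #|O| = (#|F|.-1 * #|F| * #|F|.+1)%N /\
       (forall U V, U \in O -> V \in O -> U != V -> \rank (U :&: V)%MS = 1%N)].
Proof.
set Idx := [set ab : F * F | ab.1 != 0].
exists [set plane_orbit alpha (Pl st.1 st.2) | st in Idx]; split.
- rewrite card_in_imset ?card_idx //.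
  move=> [s1 t1] [s2 t2]; rewrite !inE /= => hs1 hs2 E.
  have : Pl s1 t1 \in plane_orbit alpha (Pl s2 t2).
    rewrite -E orbE; apply/imsetP; exists ((1, 0), (1, 0)).
      by rewrite !inE /= oner_neq0 /NN; apply/eqP; ring.
    by rewrite /Mp /= Mid act_eq trmx1 mulmx1.
  rewrite orbE => /imsetP [[[a b] [c d]]]; rewrite !inE /= => /andP [ha /eqP hN] H.
  exact: (@orbit_sep s1 t1 s2 t2 a b c d ha hN H).
- apply/subsetP => O /imsetP [st _ ->]; apply/imsetP; exists (Pl st.1 st.2) => //.
  exact: Pl_in.
- move=> O /imsetP [[s t]]; rewrite inE /= => hs ->; split.
  + rewrite orbE card_in_imset ?card_Par //.
    move=> [[a b] [c d]] [[a' b'] [c' d']]; rewrite !inE /=.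
    move=> /andP [ha /eqP hN] /andP [ha' /eqP hN'] E.
    apply/eqP; apply/negPn/negP => hne.
    have hne' : (a, b, c, d) != (a', b', c', d').
      by apply: contra hne => /eqP [-> -> -> ->].
    have := @cap1 s t hs a b c d a' b' c' d' ha hN ha' hN' hne'.
    rewrite /Mp /= in E; rewrite -E.
    have /capmx_idPl e := submx_refl (act_sub (Mabcd alpha a b c d) (Pl s t)).
    by rewrite e rank_act.
  + move=> U V; rewrite orbE => /imsetP [[[a b] [c d]]] + -> /imsetP [[[a' b'] [c' d']]] + ->.
    rewrite !inE /= => /andP [ha /eqP hN] /andP [ha' /eqP hN'] hne.
    apply: (@cap1 s t hs a b c d a' b' c' d') => //.
    by apply: contra hne => /eqP [-> -> -> ->].
Qed.

End Main.

Theorem proposition3p5 (h : nat) (F : finFieldType) (hF : #|F| = (2 ^ h)%N)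
  (alpha : F) (halpha : irreducible_poly ('X^2 + 'X + alpha%:P)) :
  exists S : {set {set 'M[F]_5}},
    [/\ #|S| = ((2 ^ h) ^ 2 - 2 ^ h)%N,
        S \subset plane_orbits alpha
      & forall O, O \in S ->
          #|O| = ((2 ^ h) ^ 3 - 2 ^ h)%N /\
          (forall U V, U \in O -> V \in O -> U != V ->
             \rank (U :&: V)%MS = 1%N)].
Proof.
have [S [h1 h2 h3]] := @main F alpha (@char2 F h hF) (@noroot F alpha halpha).
exists S; rewrite hF in h1 h3; split => //.
  by rewrite h1 ar1.
by move=> O hO; have [c1 c2] := h3 O hO; split=> //; rewrite c1 ar2.
Qed.
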